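(* Let $n$ and $k$ be positive integers with $k\le n$, let $m=\binom{n}{k}$, let $\nu$ be a vector norm on $\mathbb{C}^n$, and let $\mu$ be an absolute operator norm on $\mathbb{C}^{m\times m}$. Then for every $A\in\mathbb{C}^{n\times n}$, $$\mu(C_k(A)) \le \theta_k(\mu,\nu)\max_{\alpha\subseteq\{1,\ldots,n\},\ |\alpha|=k}\ \prod_{i\in\alpha}\nu(\mathrm{col}_i(A)).$$
   Context: For $A\in\mathbb{C}^{n\times n}$ and $\alpha,\beta\subseteq\{1,\ldots,n\}$, $A(\alpha|\beta)$ is the submatrix with rows indexed by $\alpha$ and columns indexed by $\beta$. The $k$th compound $C_k(A)$ is the $\binom{n}{k}\times\binom{n}{k}$ matrix with entries $\det A(\alpha|\beta)$, $|\alpha|=|\beta|=k$, indexed by $k$-subsets in lexicographic order. $\mathrm{col}_i(B)$ denotes the $i$th column of $B$. For a vector norm $\nu$ on $\mathbb{C}^n$ and a norm $\mu$ on $\mathbb{C}^{m\times m}$, $m=\binom nk$, define $\theta_k(\mu,\nu)=\max\{\mu(C_k(B)): B\in\mathbb{C}^{n\times n},\ \nu(\mathrm{col}_i(B))=1,\ i=1,\ldots,n\}$. An absolute operator norm is a matrix norm induced (as an operator norm) by an absolute vector norm (one with $\|x\|=\||x|\|$). *)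

(* Defs.v *)
From HB Require Import structures.
From mathcomp Require Import all_boot all_order all_algebra.
From mathcomp Require Import complex.
From mathcomp Require Import reals.
Set Implicit Arguments. Unset Strict Implicit. Unset Printing Implicit Defensive.
Import Order.TTheory GRing.Theory Num.Theory.
Local Open Scope ring_scope.

Definition cmod {R : rcfType} (z : R[i]) : R := ComplexField.Normc.normc z.

Definition is_vnorm {R : rcfType} (p : nat) (nu : 'cV[R[i]]_p -> R) : Prop :=
  [/\ forall x, 0 <= nu x,
      forall x, nu x = 0 -> x = 0,
      forall (a : R[i]) x, nu (a *: x) = cmod a * nu x &
      forall x y, nu (x + y) <= nu x + nu y].

Definition is_abs_vnorm {R : rcfType} (p : nat) (nu : 'cV[R[i]]_p -> R) : Prop :=
  is_vnorm nu /\ forall x, nu x = nu (map_mx (fun z => `|z|) x).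

Definition induced_by {R : rcfType} (p : nat)
    (mu : 'M[R[i]]_p -> R) (eta : 'cV[R[i]]_p -> R) : Prop :=
  forall M : 'M[R[i]]_p,
    (forall x, eta x = 1 -> eta (M *m x) <= mu M) /\
    (forall b, (forall x, eta x = 1 -> eta (M *m x) <= b) -> mu M <= b).

Definition is_abs_opnorm {R : rcfType} (p : nat) (mu : 'M[R[i]]_p -> R) : Prop :=
  exists eta : 'cV[R[i]]_p -> R, is_abs_vnorm eta /\ induced_by mu eta.

(* all k-element subsequences of s, in lexicographic order w.r.t. the order
   of s (for s increasing, these are the k-subsets in lexicographic order) *)
Fixpoint lexsub (T : Type) (k : nat) (s : seq T) : seq (seq T) :=
  match s with
  | [::] => if k is 0 then [:: [::]] else [::]
  | x :: s' => if k is k'.+1 then map (cons x) (lexsub k' s') ++ lexsub k s'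
               else [:: [::]]
  end.

Definition ksubsets (n k : nat) : seq (seq 'I_n) := lexsub k (enum 'I_n).

Definition oentry {F : nzRingType} (n : nat) (A : 'M[F]_n)
    (oi oj : option 'I_n) : F :=
  match oi, oj with Some i, Some j => A i j | _, _ => 0 end.

Definition subm {F : nzRingType} (n k : nat) (A : 'M[F]_n)
    (alpha beta : seq 'I_n) : 'M[F]_k :=
  \matrix_(r < k, c < k) oentry A (onth alpha r) (onth beta c).

Definition compound {F : comNzRingType} (n k : nat) (A : 'M[F]_n)
    : 'M[F]_('C(n, k)) :=
  \matrix_(i < 'C(n, k), j < 'C(n, k))
    \det (subm k A (nth [::] (ksubsets n k) i) (nth [::] (ksubsets n k) j)).

Definition theta {R : realType} (n k : nat)
    (mu : 'M[R[i]]_('C(n, k)) -> R) (nu : 'cV[R[i]]_n -> R) : R :=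
  sup (fun t : R => exists B : 'M[R[i]]_n,
          (forall i, nu (col i B) = 1) /\ t = mu (compound k B)).

(* Main.v *)
Require Import Defs.
From HB Require Import structures.
From mathcomp Require Import all_boot all_order all_algebra.
From mathcomp Require Import complex.
From mathcomp Require Import reals.
From mathcomp Require Import all_classical all_analysis.
From mathcomp Require Import perm.
From mathcomp Require Import ring lra matrix_normedtype.
Set Warnings "-notation-overridden,-ambiguous-paths,-notation-incompatible-prefix".
Import Order.TTheory GRing.Theory Num.Theory.
Import numFieldTopology.Exports numFieldNormedType.Exports.
Set Implicit Arguments. Unset Strict Implicit. Unset Printing Implicit Defensive.
Local Open Scope ring_scope.
Local Open Scope complex_scope.
Section Cmod.
Variable R : rcfType.
Implicit Types z w : R[i].
Lemma cmodE z : cmod z = ComplexField.Normc.normc z. Proof. by []. Qed.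
Lemma cmodC z : (cmod z)%:C = `|z|. Proof. by []. Qed.
Lemma cmod_ge0 z : 0 <= cmod z.
Proof. by case: z => a b; exact: sqrtr_ge0. Qed.
Lemma cmodM z w : cmod (z * w) = cmod z * cmod w.
Proof. exact: ComplexField.Normc.normcM. Qed.
Lemma cmodD z w : cmod (z + w) <= cmod z + cmod w.
Proof. exact: le_normcD. Qed.
Lemma cmod0 : cmod (0 : R[i]) = 0.
Proof. exact: ComplexField.Normc.normc0. Qed.
Lemma cmodR (a : R) : cmod a%:C = `|a|.
Proof. by rewrite /cmod /= expr0n /= addr0 sqrtr_sqr. Qed.
Lemma cmodN z : cmod (- z) = cmod z.
Proof. exact: normcN. Qed.
Lemma cmodRe z : `|(complex.Re z : R)| <= cmod z.
Proof. case: z => a b; rewrite /cmod /= -sqrtr_sqr ler_sqrt ?lerDl ?sqr_ge0 //; exact: addr_ge0 (sqr_ge0 _) (sqr_ge0 _). Qed.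
Lemma cmodIm z : `|(complex.Im z : R)| <= cmod z.
Proof. case: z => a b; rewrite /cmod /= -sqrtr_sqr ler_sqrt ?lerDr ?sqr_ge0 //; exact: addr_ge0 (sqr_ge0 _) (sqr_ge0 _). Qed.
Lemma cmod_le_ReIm (a b : R) : cmod (a +i* b)%C <= `|a| + `|b|.
Proof.
have -> : (a +i* b)%C = a%:C + b%:C * 'i%C by apply/eqP; rewrite eq_complex /= !(mulr0, mul0r, mulr1, addr0, subr0, add0r, eqxx).
apply: le_trans (cmodD _ _) _; rewrite cmodM !cmodR.
have -> : cmod 'i%C = 1 :> R by rewrite /cmod /= expr0n expr1n /= add0r sqrtr1.
by rewrite mulr1.
Qed.
Lemma cmod_sum (I : Type) (r : seq I) (P : pred I) (F : I -> R[i]) :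
  cmod (\sum_(i <- r | P i) F i) <= \sum_(i <- r | P i) cmod (F i).
Proof.
elim/big_rec2: _; first by rewrite cmod0.
by move=> i y1 y2 _ h; apply: le_trans (cmodD _ _) _; rewrite lerD2l.
Qed.
Lemma cmod_prod (I : Type) (r : seq I) (P : pred I) (F : I -> R[i]) :
  cmod (\prod_(i <- r | P i) F i) = \prod_(i <- r | P i) cmod (F i).
Proof.
elim/big_rec2: _; first by rewrite /cmod /= expr0n expr1n /= addr0 sqrtr1.
by move=> i y1 y2 _ <-; rewrite cmodM.
Qed.
End Cmod.
Section VNorm.
Variables (R : rcfType) (p : nat) (nu : 'cV[R[i]]_p -> R).
Hypothesis hnu : is_vnorm nu.
Lemma nu_ge0 x : 0 <= nu x. Proof. by case: hnu. Qed.
Lemma nu_eq0 x : nu x = 0 -> x = 0. Proof. by case: hnu => _ h _ _; exact: h. Qed.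
Lemma nuZ a x : nu (a *: x) = cmod a * nu x. Proof. by case: hnu => _ _ h _; exact: h. Qed.
Lemma nuD x y : nu (x + y) <= nu x + nu y. Proof. by case: hnu => _ _ _ h; exact: h. Qed.
Lemma nu0 : nu 0 = 0.
Proof. by rewrite -(scale0r (0 : 'cV[R[i]]_p)) nuZ cmod0 mul0r. Qed.
Lemma nuN x : nu (- x) = nu x.
Proof. by rewrite -scaleN1r nuZ cmodN /cmod ComplexField.Normc.normc1 mul1r. Qed.
Lemma nu_sum (I : Type) (r : seq I) (P : pred I) (F : I -> 'cV[R[i]]_p) :
  nu (\sum_(i <- r | P i) F i) <= \sum_(i <- r | P i) nu (F i).
Proof.
elim/big_rec2: _; first by rewrite nu0.
by move=> i y1 y2 _ h; apply: le_trans (nuD _ _) _; rewrite lerD2l.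
Qed.
Lemma nu_coord x :
  nu x <= \sum_(j < p) cmod (x j 0) * nu (delta_mx j 0).
Proof.
have hx : x = \sum_(j < p) x j 0 *: delta_mx j 0.
  apply/matrixP => i k; rewrite (ord1 k) summxE (bigD1 i) //= big1 ?addr0.
    by rewrite !mxE !eqxx mulr1.
  by move=> j /negbTE ji; rewrite !mxE eq_sym ji mulr0.
rewrite {1}hx; apply: le_trans; first exact: nu_sum.
apply: ler_sum => j _.
by rewrite nuZ.
Qed.
Lemma nu_lip x y : `|nu x - nu y| <= nu (x - y).
Proof.
have h1 := nuD (x - y) y; have h2 := nuD (y - x) x.
rewrite subrK in h1; rewrite subrK -opprB nuN in h2.
rewrite ler_norml; apply/andP; split; lra.
Qed.
End VNorm.
Section Lower.
Variables (R : realType) (p : nat) (nu : 'cV[R[i]]_p -> R).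
Hypothesis hnu : is_vnorm nu.
Local Open Scope classical_set_scope.

Definition toC (v : 'rV[R]_(p + p)) : 'cV[R[i]]_p :=
  \col_j ((v 0 (lshift p j)) +i* (v 0 (rshift p j)))%C.
Definition fromC (x : 'cV[R[i]]_p) : 'rV[R]_(p + p) :=
  \row_i (match fintype.split i with inl j => complex.Re (x j 0) | inr j => complex.Im (x j 0) end).

Lemma toCK x : toC (fromC x) = x.
Proof.
apply/matrixP => i k; rewrite (ord1 k) !mxE.
by rewrite (unsplitK (inl _)) (unsplitK (inr _)); case: (x i 0).
Qed.

Lemma toCB v w : toC (v - w) = toC v - toC w.
Proof. by apply/matrixP => i k; rewrite !mxE. Qed.

Lemma toCZ (a : R) v : toC (a *: v) = a%:C *: toC v.
Proof.
apply/matrixP => i k; rewrite !mxE; apply/eqP.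
by rewrite eq_complex /= !(mul0r, subr0, addr0) !eqxx.
Qed.

Lemma toC_eq0 v : toC v = 0 -> v = 0.
Proof.
move=> h; apply/matrixP => i j; rewrite (ord1 i) mxE.
case: (split_ordP j) => k ->; have := congr1 (fun M : 'cV_p => M k 0) h; rewrite !mxE.
  by case=> -> _.
by case=> _ ->.
Qed.

Lemma entry_le (v : 'rV[R]_(p + p)) i : `|v 0 i| <= `|v|.
Proof.
have /mapP[j Hj ->] : `|v 0 i| \in [seq `|v x.1 x.2| | x : 'I_1 * 'I_(p + p)].
  by apply/mapP; exists (0, i) => //=; rewrite mem_enum.
by rewrite [leRHS]/Num.Def.normr /= mx_normrE; apply/bigmax_geP; right => /=; exists j.
Qed.

Definition Lc := 2 * \sum_(j < p) nu (delta_mx j 0).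

Lemma Lc_ge0 : 0 <= Lc.
Proof. by rewrite mulr_ge0 // sumr_ge0 // => j _; exact: nu_ge0. Qed.

Lemma nu_toC_le v : nu (toC v) <= Lc * `|v|.
Proof.
apply: le_trans; first exact: nu_coord.
rewrite /Lc mulrAC big_distrr /= ler_sum // => j _.
rewrite ler_wpM2r //; first exact: nu_ge0.
rewrite mxE; apply: le_trans; first exact: cmod_le_ReIm.
by rewrite mulr2n mulrDl mul1r lerD // entry_le.
Qed.

Lemma f_lip v w : `|nu (toC v) - nu (toC w)| <= Lc * `|v - w|.
Proof.
by apply: le_trans; [exact: nu_lip | rewrite -toCB nu_toC_le].
Qed.

Lemma f_cont : continuous (fun v : 'rV[R]_(p + p) => nu (toC v)).
Proof.
move=> v; apply/(@cvgrPdist_le _ _ _ (nbhs v) (nbhs_filter v)) => e e0.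
have eL : 0 < e / (Lc + 1) by rewrite divr_gt0 // ltr_wpDl // Lc_ge0.
near=> t.
apply: le_trans; first exact: f_lip.
have : `|v - t| <= e / (Lc + 1).
  near: t; exact: (@cvgr_dist_le _ _ _ (nbhs v) _ id v (@cvg_id _ (nbhs v)) _ eL).
move=> ht; apply: le_trans (ler_wpM2l Lc_ge0 ht) _.
rewrite mulrCA ger_pMr // ler_pdivrMr ?mul1r ?lerDl //.
by rewrite ltr_wpDl // Lc_ge0.
Unshelve. all: by end_near.
Qed.
End Lower.
Section Lower2.
Variables (R : realType) (p : nat) (nu : 'cV[R[i]]_p -> R).
Hypothesis hnu : is_vnorm nu.
Local Open Scope classical_set_scope.

Lemma normalize1 (v : 'rV[R]_(p + p)) : v != 0 -> `| `|v|^-1 *: v| = 1.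
Proof.
move=> v0; rewrite normrZ normfV normr_id mulVf //.
by rewrite normr_eq0.
Qed.

Lemma nu_lower : exists2 c : R, 0 < c &
  forall (x : 'cV[R[i]]_p) (j : 'I_p), cmod (x j 0) <= c * nu x.
Proof.
have [p0|p0] := posnP p.
  by exists 1 => // x j; have := ltn_ord j; rewrite {2}p0.
pose S := [set v : 'rV[R]_(p + p) | `|v| = 1].
have S0 : S !=set0.
  pose v1 : 'rV[R]_(p + p) := const_mx 1.
  have v10 : v1 != 0.
    apply/eqP => /matrixP /(_ 0 (lshift p (Ordinal p0))); rewrite !mxE.
    by move/eqP; rewrite oner_eq0.
  by exists (`|v1|^-1 *: v1); rewrite /S /= normalize1.
have Sc : compact S.
  apply: bounded_closed_compact.
    suff h : [bounded x | x in S] by exact: h.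
    rewrite /bounded_near; near=> M; move=> v /= ->; near: M.
    by apply: nbhs_pinfty_ge.
  have -> : S = (fun v : 'rV[R]_(p + p) => `|v|) @^-1` [set 1] by [].
  apply: preimage_closed; last exact: closed_eq.
  by move=> v _; exact: norm_continuous.
have Scont : {within S, continuous (fun v : 'rV[R]_(p + p) => nu (toC v))}.
  by apply: continuous_subspaceT; exact: f_cont.
have [c0 c0S c0min] := EVT_min_rV S0 Sc Scont.
have c01 : `|c0| = 1 by move: c0S; rewrite inE.
pose m := nu (toC c0).
have m0 : 0 < m.
  rewrite lt_def nu_ge0 // andbT; apply/eqP => /(nu_eq0 hnu) /toC_eq0 c00.
  by move: c01; rewrite c00 normr0 => /eqP; rewrite eq_sym oner_eq0.
exists (2 / m); first by rewrite divr_gt0.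
move=> x j.
pose v := fromC x.
have e1 : v 0 (lshift p j) = complex.Re (x j 0) by rewrite mxE (unsplitK (inl _)).
have e2 : v 0 (rshift p j) = complex.Im (x j 0) by rewrite mxE (unsplitK (inr _)).
have hc : cmod (x j 0) <= 2 * `|v|.
  apply: le_trans (_ : `|v 0 (lshift p j)| + `|v 0 (rshift p j)| <= _).
    by rewrite e1 e2; case: (x j 0) => a b; exact: cmod_le_ReIm.
  by rewrite mulr2n mulrDl mul1r lerD // entry_le.
have [v0|v0] := eqVneq v 0.
  have x0 : x = 0 by rewrite -(toCK x) -/v v0; apply/matrixP => a b; rewrite !mxE.
  by rewrite x0 mxE cmod0 (nu0 hnu) mulr0.
have wS : (`|v|^-1 *: v) \in S by rewrite inE /S /= normalize1.
have := c0min _ wS; rewrite toCZ toCK nuZ // cmodR ger0_norm ?invr_ge0 // -/m.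
have vpos : 0 < `|v| by rewrite normr_gt0.
rewrite mulrC ler_pdivlMr // => hm; apply: le_trans hc _.
by rewrite -mulrA ler_pM2l // mulrC ler_pdivlMr // mulrC.
Unshelve. all: by end_near.
Qed.
End Lower2.
Lemma size_lexsub (T : Type) (s : seq T) k : size (lexsub k s) = 'C(size s, k).
Proof. elim: s k => [|x s IH] [|k] //=.
by rewrite size_cat size_map !IH binS addnC. Qed.

Lemma mem_lexsub (T : eqType) (s : seq T) k t :
  t \in lexsub k s -> size t = k /\ subseq t s.
Proof.
elim: s k t => [|x s IH] [|k] t //=.
- by rewrite inE => /eqP ->.
- by rewrite inE => /eqP ->; split => //; exact: sub0seq.
rewrite mem_cat => /orP [/mapP [t' ht' ->] | ht].
  by have [h1 h2] := IH _ _ ht'; split; [rewrite /= h1 | rewrite /= eqxx].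
have [h1 h2] := IH _ _ ht; split => //; exact: subseq_trans h2 (subseq_cons s x).
Qed.

Lemma ksub_props n k (b : 'I_('C(n, k))) :
  size (nth [::] (ksubsets n k) b) = k /\ uniq (nth [::] (ksubsets n k) b).
Proof.
have : nth [::] (ksubsets n k) b \in ksubsets n k.
  by apply: mem_nth; rewrite /ksubsets size_lexsub size_enum_ord.
move/mem_lexsub => [h1 h2]; split => //; exact: subseq_uniq h2 (enum_uniq _).
Qed.

Lemma prod_onth (R : comNzRingType) (T : Type) (s : seq T) (d : T -> R) :
  \prod_(c < size s) (if onth s c is Some j then d j else 0) = \prod_(j <- s) d j.
Proof.
elim: s => [|x s IH]; first by rewrite big_ord0 big_nil.
by rewrite big_ord_recl big_cons /= -IH.
Qed.

Lemma prod_onth_set (R : comNzRingType) n (s : seq 'I_n) (d : 'I_n -> R) :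
  uniq s ->
  \prod_(c < size s) (if onth s c is Some j then d j else 0) =
  \prod_(j in [set x in s]) d j.
Proof.
move=> us; rewrite prod_onth big_uniq //; apply: eq_bigl => j.
by rewrite inE.
Qed.

Lemma card_set_seq n (s : seq 'I_n) : uniq s -> #|[set x in s]| = size s.
Proof. by move=> us; rewrite cardsE; apply/card_uniqP. Qed.

Section Compound.
Variable (F : comNzRingType).

Lemma subm_diag n k (B : 'M[F]_n) (r : 'rV[F]_n) al be :
  subm k (B *m diag_mx r) al be =
  subm k B al be *m diag_mx (\row_c (if onth be c is Some j then r 0 j else 0)).
Proof.
apply/matrixP => i j; rewrite [in RHS]mul_mx_diag !mxE.
case: (onth al i) => [a|]; case: (onth be j) => [b|] /=;
  by rewrite ?mul_mx_diag ?mxE ?mul0r ?mulr0.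
Qed.

Lemma compound_diag n k (B : 'M[F]_n) (r : 'rV[F]_n) :
  compound k (B *m diag_mx r) =
  compound k B *m diag_mx (\row_b \prod_(c < k)
     (if onth (nth [::] (ksubsets n k) b) c is Some j then r 0 j else 0)).
Proof.
apply/matrixP => a b; rewrite mul_mx_diag !mxE subm_diag det_mulmx det_diag.
by congr (_ * _); apply: eq_bigr => c _; rewrite mxE.
Qed.
End Compound.
Section Abs.
Variables (R : rcfType) (q : nat) (eta : 'cV[R[i]]_q -> R).
Hypothesis heta : is_abs_vnorm eta.
Let hv : is_vnorm eta. Proof. by case: heta. Qed.
Let habs x : eta x = eta (map_mx (fun z => `|z|) x). Proof. by case: heta => _; apply. Qed.

Lemma eta_flip (y : 'cV[R[i]]_q) j :
  eta (\col_i (if i == j then - y i 0 else y i 0)) = eta y.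
Proof.
rewrite [LHS]habs [RHS]habs; congr eta; apply/matrixP => i k.
by rewrite !mxE (ord1 k); case: eqP => _; rewrite ?normrN.
Qed.

Lemma eta_scale1 (y : 'cV[R[i]]_q) j (t : R) : 0 <= t <= 1 ->
  eta (\col_i (if i == j then t%:C * y i 0 else y i 0)) <= eta y.
Proof.
move=> /andP [t0 t1].
pose a : R := (1 + t) / 2; pose b : R := (1 - t) / 2.
have a0 : 0 <= a by rewrite /a divr_ge0 //; lra.
have b0 : 0 <= b by rewrite /b divr_ge0 //; lra.
have eab : a - b = t by rewrite /a /b; field.
have fab : a + b = 1 by rewrite /a /b; field.
have -> : \col_i (if i == j then t%:C * y i 0 else y i 0) =
   a%:C *: y + b%:C *: \col_i (if i == j then - y i 0 else y i 0).
  apply/matrixP => i k; rewrite (ord1 k) !mxE; case: eqP => _.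
    by rewrite -eab rmorphB /= mulrN -mulrBl.
  by rewrite -mulrDl -rmorphD /= fab mul1r.
apply: le_trans; first exact: (nuD hv).
rewrite !(nuZ hv) eta_flip !cmodR !ger0_norm // -mulrDl fab mul1r //.
Qed.

Lemma eta_diag1 (t : 'I_q -> R) : (forall i, 0 <= t i <= 1) ->
  forall x, eta (diag_mx (\row_i (t i)%:C) *m x) <= eta x.
Proof.
move=> ht x.
pose y m := \col_i (if (i < m)%N then (t i)%:C * x i 0 else x i 0).
have hy : forall m, eta (y m) <= eta x.
  elim=> [|m IH].
    by rewrite le_eqVlt; apply/orP; left; apply/eqP; congr eta; apply/matrixP => i k; rewrite (ord1 k) !mxE.
  have [hm|hm] := ltnP m q.
    apply: le_trans IH.
    have -> : y m.+1 = \col_i (if i == Ordinal hm then (t i)%:C * y m i 0 else y m i 0).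
      apply/matrixP => i k; rewrite (ord1 k) !mxE ltnS leq_eqVlt.
      case: (eqVneq i (Ordinal hm)) => [->|ne] /=; first by rewrite eqxx ltnn.
      have -> : (nat_of_ord i == m) = false.
        by apply/negbTE; apply: contra ne => /eqP h; apply/eqP/val_inj.
      by [].
    have -> : \col_i (if i == Ordinal hm then (t i)%:C * y m i 0 else y m i 0) =
              \col_i (if i == Ordinal hm then (t (Ordinal hm))%:C * y m i 0 else y m i 0).
      by apply/matrixP => i k; rewrite !mxE; case: eqP => // ->.
    exact: eta_scale1.
  apply: le_trans IH; rewrite le_eqVlt; apply/orP; left; apply/eqP; congr eta.
  apply/matrixP => i k; rewrite !mxE; have := ltn_ord i => hi.
  by rewrite (leq_trans hi hm) (leq_trans hi (leqW hm)).
apply: le_trans (hy q); rewrite le_eqVlt; apply/orP; left; apply/eqP; congr eta.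
by apply/matrixP => i k; rewrite mul_diag_mx !mxE ltn_ord (ord1 k).
Qed.

Lemma eta_diag (t : 'I_q -> R) (M : R) : 0 <= M -> (forall i, 0 <= t i <= M) ->
  forall x, eta (diag_mx (\row_i (t i)%:C) *m x) <= M * eta x.
Proof.
move=> M0 ht x; have [eM|Mp] := eqVneq M 0.
  rewrite eM.
  have -> : diag_mx (\row_i (t i)%:C) *m x = 0.
    apply/matrixP => i k; rewrite mul_diag_mx !mxE.
    have /andP [h1 h2] := ht i.
    have -> : t i = 0 by apply/eqP; rewrite eq_le h1 -eM h2.
    by rewrite rmorph0 mul0r.
  by rewrite (nu0 hv) mul0r.
have Mpos : 0 < M by rewrite lt_def Mp M0.
have -> : diag_mx (\row_i (t i)%:C) = M%:C *: diag_mx (\row_i (t i / M)%:C).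
  apply/matrixP => i j; rewrite !mxE; case: eqP => _ //=; last by rewrite !mulr0n mulr0.
  by rewrite !mulr1n -rmorphM /= mulrCA divff ?mulr1.
rewrite -scalemxAl (nuZ hv) cmodR ger0_norm // ler_pM2l //.
apply: eta_diag1 => i; have /andP [h1 h2] := ht i.
by rewrite divr_ge0 // ler_pdivrMr // mul1r.
Qed.
End Abs.
Lemma unit_vec (R : rcfType) p (nu : 'cV[R[i]]_p -> R) (hnu : is_vnorm nu) (i0 : 'I_p) :
  exists u, nu u = 1.
Proof.
pose e : 'cV[R[i]]_p := delta_mx i0 0.
have ne : nu e != 0.
  apply/eqP => /(nu_eq0 hnu) /matrixP /(_ i0 0); rewrite !mxE !eqxx /=.
  by move/eqP; rewrite oner_eq0.
exists ((nu e)^-1%:C *: e); rewrite (nuZ hnu) cmodR ger0_norm ?invr_ge0 ?(nu_ge0 hnu) //.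
by rewrite mulVf.
Qed.

Section Op.
Variables (R : rcfType) (q : nat) (mu : 'M[R[i]]_q -> R) (eta : 'cV[R[i]]_q -> R).
Hypothesis heta : is_abs_vnorm eta.
Hypothesis hind : induced_by mu eta.
Let hv : is_vnorm eta. Proof. by case: heta. Qed.

Lemma mu_ge0 (i0 : 'I_q) M : 0 <= mu M.
Proof.
have [u hu] := unit_vec hv i0.
by apply: le_trans (proj1 (hind M) u hu); exact: (nu_ge0 hv).
Qed.

Lemma mu_bound M y : eta (M *m y) <= mu M * eta y.
Proof.
have [->|y0] := eqVneq y 0; first by rewrite mulmx0 (nu0 hv) mulr0.
have ey : eta y != 0 by apply: contra y0 => /eqP /(nu_eq0 hv) ->.
have ey0 : 0 < eta y by rewrite lt_def ey (nu_ge0 hv).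
have h1 : eta ((eta y)^-1%:C *: y) = 1.
  by rewrite (nuZ hv) cmodR ger0_norm ?invr_ge0 ?(nu_ge0 hv) // mulVf.
have := proj1 (hind M) _ h1.
rewrite -scalemxAr (nuZ hv) cmodR ger0_norm ?invr_ge0 ?(nu_ge0 hv) //.
by rewrite mulrC ler_pdivrMr.
Qed.

Lemma mu_diag (i0 : 'I_q) M (t : 'I_q -> R) (Mx : R) : 0 <= Mx ->
  (forall i, 0 <= t i <= Mx) ->
  mu (M *m diag_mx (\row_i (t i)%:C)) <= mu M * Mx.
Proof.
move=> Mx0 ht; apply: (proj2 (hind _)) => x hx.
rewrite -mulmxA; apply: le_trans (mu_bound _ _) _.
rewrite ler_wpM2l ?(mu_ge0 i0) //.
by have := eta_diag heta Mx0 ht x; rewrite hx mulr1.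
Qed.
End Op.
Lemma det_bound (R : rcfType) k (M : 'M[R[i]]_k) (c : R) : 0 <= c ->
  (forall i j, cmod (M i j) <= c) -> cmod (\det M) <= \sum_(s : 'S_k) c ^+ k.
Proof.
move=> c0 hM; rewrite /determinant.
apply: le_trans; first exact: cmod_sum.
apply: ler_sum => s _; rewrite cmodM cmod_prod.
have -> : cmod ((-1) ^+ odd_perm s : R[i]) = 1.
  by case: (odd_perm s); rewrite /= ?expr1 ?expr0 /cmod /= ?sqrrN ?oppr0 expr0n /= addr0 expr1n sqrtr1.
rewrite mul1r -[in leRHS](card_ord k) -prodr_const; apply: ler_prod => i _.
by rewrite cmod_ge0 hM.
Qed.

Lemma subm_bound (R : rcfType) n k (B : 'M[R[i]]_n) al be (c : R) : 0 <= c ->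
  (forall i j, cmod (B i j) <= c) -> forall i j, cmod (subm k B al be i j) <= c.
Proof.
move=> c0 hB i j; rewrite mxE /oentry.
by case: (onth al i) => [a|]; case: (onth be j) => [b|]; rewrite ?cmod0.
Qed.

Lemma mu_upper (R : rcfType) q (mu : 'M[R[i]]_q -> R) (eta : 'cV[R[i]]_q -> R)
  (heta : is_vnorm eta) (hind : induced_by mu eta) (c2 K1 : R) :
  0 <= c2 -> 0 <= K1 ->
  (forall (x : 'cV[R[i]]_q) (j : 'I_q), eta x = 1 -> cmod (x j 0) <= c2) ->
  forall M : 'M[R[i]]_q, (forall i j, cmod (M i j) <= K1) ->
  mu M <= \sum_(i < q) (\sum_(j < q) K1 * c2) * eta (delta_mx i 0).
Proof.
move=> c20 K10 hx M hM; apply: (proj2 (hind M)) => x ex.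
apply: le_trans; first exact: (nu_coord heta).
apply: ler_sum => i _; apply: ler_wpM2r; first exact: (nu_ge0 heta).
rewrite mxE; apply: le_trans; first exact: cmod_sum.
apply: ler_sum => j _; rewrite cmodM; apply: ler_pM; rewrite ?cmod_ge0 //.
exact: hx.
Qed.
Lemma prod_onth_set' (R : comNzRingType) n k (s : seq 'I_n) (d : 'I_n -> R) :
  size s = k -> uniq s ->
  \prod_(c < k) (if onth s c is Some j then d j else 0) =
  \prod_(j in [set x in s]) d j.
Proof. by move=> <-; exact: prod_onth_set. Qed.

Theorem theorem2p1 (R : realType) (n k : nat) (hk0 : (0 < k)%N) (hkn : (k <= n)%N)
    (nu : 'cV[R[i]]_n -> R) (mu : 'M[R[i]]_('C(n, k)) -> R)
    (hnu : is_vnorm nu) (hmu : is_abs_opnorm mu) (A : 'M[R[i]]_n) :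
  mu (compound k A) <=
    theta mu nu *
      \big[Num.max/0]_(alpha : {set 'I_n} | #|alpha| == k)
         \prod_(i in alpha) nu (col i A).
Proof.
have n0 : (0 < n)%N := leq_trans hk0 hkn.
pose i0n : 'I_n := Ordinal n0.
have m0 : (0 < 'C(n, k))%N by rewrite bin_gt0.
pose i0m : 'I_('C(n, k)) := Ordinal m0.
case: hmu => eta [heta hind].
have hetav : is_vnorm eta by case: heta.
have [c1 c1p hc1] := nu_lower hnu.
have [c2 c2p hc2] := nu_lower hetav.
pose K1 := \sum_(s : 'S_k) c1 ^+ k.
pose K := \sum_(i < 'C(n, k)) (\sum_(j < 'C(n, k)) K1 * c2) * eta (delta_mx i 0).
have hE : forall B : 'M[R[i]]_n, (forall i, nu (col i B) = 1) -> mu (compound k B) <= K.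
  move=> B hB; apply: (mu_upper hetav hind).
  - exact: ltW.
  - by apply: sumr_ge0 => s _; apply: exprn_ge0; exact: ltW.
  - by move=> x j hx; have := hc2 x j; rewrite hx mulr1.
  move=> a b; rewrite mxE; apply: det_bound; first exact: ltW.
  apply: subm_bound; first exact: ltW.
  by move=> i j; have := hc1 (col j B) i; rewrite hB mulr1 mxE.
have [u hu] := unit_vec hnu i0n.
pose E := fun t : R => exists B : 'M[R[i]]_n,
   (forall i, nu (col i B) = 1) /\ t = mu (compound k B).
have hsup : has_sup E.
  split.
    exists (mu (compound k (\matrix_(i, j) u i 0))); exists (\matrix_(i, j) u i 0).
    split => // i; rewrite -hu; congr nu; apply/matrixP => a b.
    by rewrite !mxE (ord1 b).
  by exists K => t [B [hB ->]]; exact: hE.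
have htheta : forall B, (forall i, nu (col i B) = 1) ->
    mu (compound k B) <= theta mu nu.
  by move=> B hB; apply: (sup_upper_bound hsup); exists B.
pose d j := nu (col j A).
pose B := \matrix_(i, j) (if d j == 0 then u i 0 else A i j / (d j)%:C).
have hB : forall j, nu (col j B) = 1.
  move=> j; case: (eqVneq (d j) 0) => dj.
    have -> : col j B = u by apply/matrixP => a b; rewrite !mxE dj eqxx (ord1 b).
    done.
  have -> : col j B = (d j)^-1%:C *: col j A.
    by apply/matrixP => a b; rewrite !mxE (negbTE dj) fmorphV mulrC.
  by rewrite (nuZ hnu) cmodR ger0_norm ?invr_ge0 ?(nu_ge0 hnu) // mulVf.
have hA : A = B *m diag_mx (\row_j (d j)%:C).
  apply/matrixP => a b; rewrite mul_mx_diag !mxE.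
  case: (eqVneq (d b) 0) => db.
    have := nu_eq0 hnu db; move/matrixP/(_ a 0); rewrite !mxE => ->.
    by rewrite db rmorph0 mulr0.
  by rewrite divfK // fmorph_eq0.
pose qf b := \prod_(c < k)
   (if onth (nth [::] (ksubsets n k) b) c is Some j then d j else 0).
have hC : compound k A = compound k B *m diag_mx (\row_b (qf b)%:C).
  rewrite {1}hA compound_diag; congr (_ *m diag_mx _); apply/matrixP => a b.
  rewrite !mxE rmorph_prod; apply: eq_bigr => c _.
  by case: onth => [j|]; rewrite ?mxE ?rmorph0.
pose Mx := \big[Num.max/0]_(alpha : {set 'I_n} | #|alpha| == k)
         \prod_(i in alpha) nu (col i A).
have Mx0 : 0 <= Mx by exact: bigmax_ge_id.
have hq : forall b : 'I_('C(n, k)), 0 <= qf b <= Mx.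
  move=> b; have [hs hu'] := ksub_props b.
  apply/andP; split.
    by apply: prodr_ge0 => c _; case: onth => [j|] //; exact: (nu_ge0 hnu).
  rewrite /qf (prod_onth_set' _ hs hu').
  apply: (@le_bigmax_cond _ _ _ _ _ (fun alpha : {set 'I_n} => #|alpha| == k) (fun alpha : {set 'I_n} => \prod_(i in alpha) d i)).
  by rewrite card_set_seq // hs.
rewrite hC; apply: le_trans (mu_diag heta hind i0m _ Mx0 hq) _.
by rewrite ler_wpM2r //; exact: htheta.
Qed.
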